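(* In the worst case, $\Omega(n)$ users move after $\Omega(n)$ rounds of the myopic best-response dynamics described below: there are constants $c_1,c_2>0$ such that for every sufficiently large $n$ there is an instance with $n$ users (nonnegative embedding weights, features, linear threshold classifier, scaled 2-norm cost) in which at least $c_1 n$ users move at a round $t\ge c_2 n$.
   Context: Users $i$ have features $x_i\in\mathbb{R}^\ell$; embeddings $\phi(x_i;x_{-i})=\widetilde{w}_{ii}x_i+\sum_{j\neq i}\widetilde{w}_{ji}x_j$ with $\widetilde{w}_{ji}\ge0$. Classifier: $h_{\theta,b}(x_i;x_{-i})=\mathrm{sign}(\theta^\top\phi(x_i;x_{-i})+b)$, $\mathrm{sign}(0)=+1$. Cost $c_\beta(x,x')=\beta\|x-x'\|_2$, $\beta>0$. Dynamics: $x_i^{(0)}=x_i$; at each round $t\ge1$ all users update concurrently; user $i$ changes her features only if she is currently classified $-1$ and some $x'$ with $h(x';x^{(t-1)}_{-i})=+1$ has $c_\beta(x^{(t-1)}_i,x')\le2$, in which case she moves to the minimum-cost such point; otherwise she stays. User $i$ ''moves at round $t$'' if $x_i^{(t)}\neq x_i^{(t-1)}$. *)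

(* Defs.v *)
From mathcomp Require Import all_boot all_order all_algebra.
From mathcomp Require Import reals.
Set Implicit Arguments. Unset Strict Implicit. Unset Printing Implicit Defensive.
Import Order.TTheory GRing.Theory Num.Theory.
Local Open Scope ring_scope.

Section Strategic.
Variables (R : realType) (l n : nat).

Definition norm2 (v : 'rV[R]_l) : R := Num.sqrt (\sum_(k < l) v ord0 k ^+ 2).

Definition cost (beta : R) (x x' : 'rV[R]_l) : R := beta * norm2 (x - x').

Definition dotp (u v : 'rV[R]_l) : R := \sum_(k < l) u ord0 k * v ord0 k.

(* w j i is the weight \tilde w_{ji} of user j in user i's embedding. *)
Definition embed (w : 'I_n -> 'I_n -> R) (i : 'I_n) (xi : 'rV[R]_l)
  (X : 'I_n -> 'rV[R]_l) : 'rV[R]_l :=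
  w i i *: xi + \sum_(j < n | j != i) w j i *: X j.

(* h_{theta,b}(x_i; x_{-i}) = +1, with sign(0) = +1. *)
Definition classified_pos (w : 'I_n -> 'I_n -> R) (theta : 'rV[R]_l) (b : R)
  (i : 'I_n) (xi : 'rV[R]_l) (X : 'I_n -> 'rV[R]_l) : Prop :=
  0 <= dotp theta (embed w i xi X) + b.

Definition br_step (w : 'I_n -> 'I_n -> R) (theta : 'rV[R]_l) (b beta : R)
  (Xprev : 'I_n -> 'rV[R]_l) (i : 'I_n) (xnew : 'rV[R]_l) : Prop :=
  let can_move :=
    ~ classified_pos w theta b i (Xprev i) Xprev /\
    exists x', classified_pos w theta b i x' Xprev /\ cost beta (Xprev i) x' <= 2 in
  (can_move ->
     classified_pos w theta b i xnew Xprev /\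
     cost beta (Xprev i) xnew <= 2 /\
     forall y, classified_pos w theta b i y Xprev ->
       cost beta (Xprev i) xnew <= cost beta (Xprev i) y) /\
  (~ can_move -> xnew = Xprev i).

Definition trajectory (w : 'I_n -> 'I_n -> R) (theta : 'rV[R]_l) (b beta : R)
  (x : 'I_n -> 'rV[R]_l) (X : nat -> 'I_n -> 'rV[R]_l) : Prop :=
  X 0%N = x /\ forall t i, br_step w theta b beta (X t) i (X t.+1 i).

Definition moves_at (X : nat -> 'I_n -> 'rV[R]_l) (i : 'I_n) (t : nat) : Prop :=
  (0 < t)%N /\ X t i <> X t.-1 i.

End Strategic.

(* Main.v *)
Require Import Defs.
From mathcomp Require Import all_boot all_order all_algebra.
From mathcomp Require Import reals.
From mathcomp Require Import zify lra.
From Stdlib Require Import FunctionalExtensionality.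
Import Order.TTheory GRing.Theory Num.Theory.
Local Open Scope ring_scope.

Section Constr.
Variables (R : realType) (n : nat).

Definition ww (j i : 'I_n) : R :=
  if (j.+1 == i)%N then 1 else if j == i then 1 else 0.
Definition fv (t j : nat) : R := if (j < t)%N then 0 else -(3/2).
Definition Z (t : nat) (i : 'I_n) : 'rV[R]_1 := const_mx (fv t i).
Definition th : 'rV[R]_1 := const_mx 1.
Definition pv (t : nat) (i : nat) : R := if i is k.+1 then fv t k else 0.

Lemma cost1 (u v : 'rV[R]_1) : cost 1 u v = `|u ord0 ord0 - v ord0 ord0|.
Proof. by rewrite /cost /norm2 big_ord1 sqrtr_sqr mul1r !mxE. Qed.

Lemma score (i : 'I_n) (y : 'rV[R]_1) (P : 'I_n -> 'rV[R]_1) :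
  dotp th (embed ww i y P) + 0 =
  y ord0 ord0 + \sum_(j < n | j != i) ww j i * P j ord0 ord0.
Proof.
rewrite /dotp big_ord1 addr0 /th !mxE mul1r /ww eqxx.
case: ifP => [/eqP h|_]; first by lia.
rewrite mul1r summxE; congr (_ + _); apply: eq_bigr => j _; by rewrite !mxE.
Qed.

Lemma predZ t (i : 'I_n) :
  \sum_(j < n | j != i) ww j i * Z t j ord0 ord0 = pv t i.
Proof.
have -> : \sum_(j < n | j != i) ww j i * Z t j ord0 ord0 =
          \sum_(j < n) (j.+1 == i)%:R * fv t j.
  rewrite (@bigD1 _ _ _ _ i xpredT) //= [X in X + _]mulr_natl eqn_leq ltnn /= mulr0n add0r.
  apply: eq_bigr => j hj; rewrite /ww /Z mxE (negbTE hj).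
  by case: (j.+1 == i)%N.
case: i => [[|k] hk] /=.
  by rewrite big1 // => j _; rewrite mul0r.
have hk' : (k < n)%N by lia.
rewrite (bigD1 (Ordinal hk')) //= eqxx mul1r big1 ?addr0 // => j hj.
have -> : (j.+1 == k.+1)%N = false.
  apply/negbTE; apply: contra hj => /eqP [] h; apply/eqP; exact: val_inj.
by rewrite mul0r.
Qed.

Lemma pos_iff t i y :
  classified_pos ww th 0 i y (Z t) <-> 0 <= y ord0 ord0 + pv t i.
Proof. by rewrite /classified_pos score predZ. Qed.

Lemma rv1 (y : 'rV[R]_1) : y = const_mx (y ord0 ord0).
Proof. by apply/rowP => k; rewrite (ord1 k) mxE. Qed.

Lemma Zval t i : Z t i ord0 ord0 = fv t i.
Proof. by rewrite mxE. Qed.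

Lemma step_det t i y : br_step ww th 0 1 (Z t) i y -> y = Z t.+1 i.
Proof.
rewrite /br_step /= => -[H1 H2].
have [hlt|hge] := ltnP i t.
- have hp : pv t i = 0 by case: (nat_of_ord i) hlt => [|k] //= h; rewrite /fv; case: ifP => //; lia.
  rewrite H2; last first.
    by move=> [hn _]; apply: hn; rewrite pos_iff hp Zval /fv hlt addr0.
  by rewrite /Z /fv hlt ltnS ltnW.
case: (ltngtP t i) hge => // [hti|hti] _.
- have hp : pv t i = -(3/2).
    by case: (nat_of_ord i) hti => [|k] //= h; rewrite /fv; case: ifP => //; lia.
  rewrite H2; last first.
    move=> [_ [x' [hx hc]]]; move: hx hc; rewrite pos_iff hp cost1 Zval /fv.
    rewrite ifF; last by lia.
    move=> hx; rewrite ler_norml; lra.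
  by rewrite /Z /fv !ifF //; lia.
- have hp : pv t i = 0.
    by case: (nat_of_ord i) hti => [|k] //= h; rewrite /fv; case: ifP => //; lia.
  have ht : fv t i = -(3/2) by rewrite /fv -hti ltnn.
  case: H1.
    split; first by rewrite pos_iff hp Zval ht; lra.
    exists (const_mx 0); split; first by rewrite pos_iff hp mxE; lra.
    by rewrite cost1 Zval ht mxE subr0 normrN ger0_norm; lra.
  move=> hy [hc hm].
  have := hm (const_mx 0); rewrite pos_iff hp mxE addr0 => /(_ (lexx _)).
  move: hy; rewrite pos_iff hp !cost1 Zval ht mxE addr0 => hy.
  rewrite subr0 normrN [X in _ <= X]ger0_norm; last lra.
  rewrite ler_norml => /andP [h1 h2].
  rewrite (rv1 y) /Z /fv -hti ltnSn; congr const_mx; lra.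
Qed.

Lemma step_ok t i : br_step ww th 0 1 (Z t) i (Z t.+1 i).
Proof.
rewrite /br_step /=.
have [hlt|hge] := ltnP i t.
- have hp : pv t i = 0 by case: (nat_of_ord i) hlt => [|k] //= h; rewrite /fv; case: ifP => //; lia.
  split.
    by move=> [hn _]; exfalso; apply: hn; rewrite pos_iff hp Zval /fv hlt addr0.
  by move=> _; rewrite /Z /fv hlt ltnS ltnW.
case: (ltngtP t i) hge => // [hti|hti] _.
- have hp : pv t i = -(3/2).
    by case: (nat_of_ord i) hti => [|k] //= h; rewrite /fv; case: ifP => //; lia.
  split.
    move=> [_ [x' [hx hc]]]; exfalso; move: hx hc; rewrite pos_iff hp cost1 Zval /fv.
    rewrite ifF; last by lia.
    move=> hx; rewrite ler_norml; lra.
  by move=> _; rewrite /Z /fv !ifF //; lia.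
- have hp : pv t i = 0.
    by case: (nat_of_ord i) hti => [|k] //= h; rewrite /fv; case: ifP => //; lia.
  have ht : fv t i = -(3/2) by rewrite /fv -hti ltnn.
  have hz : Z t.+1 i = const_mx 0 by rewrite /Z /fv -hti ltnSn.
  split; last first.
    move=> hn; exfalso; apply: hn.
    split; first by rewrite pos_iff hp Zval ht; lra.
    exists (const_mx 0); split; first by rewrite pos_iff hp mxE; lra.
    by rewrite cost1 Zval ht mxE subr0 normrN ger0_norm; lra.
  move=> _; rewrite hz; split; first by rewrite pos_iff hp mxE; lra.
  split; first by rewrite cost1 Zval ht mxE subr0 normrN ger0_norm; lra.
  move=> y; rewrite pos_iff hp !cost1 Zval ht mxE addr0 subr0 normrN => hy.
  rewrite ger0_norm; last lra.
  rewrite -normrN opprB opprK ger0_norm; lra.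
Qed.

End Constr.

Lemma half_ord n (k : 'I_(n - n./2)) : (n./2 + k < n)%N.
Proof. case: k => k hk /=; lia. Qed.

Theorem corollary3 (R : realType) :
  exists (c1 c2 : R), 0 < c1 /\ 0 < c2 /\
  exists N : nat, forall n : nat, (N <= n)%N ->
  exists (l : nat) (w : 'I_n -> 'I_n -> R) (x : 'I_n -> 'rV[R]_l)
         (theta : 'rV[R]_l) (b beta : R),
    (forall i j, 0 <= w j i) /\ 0 < beta /\
    (exists X, trajectory w theta b beta x X) /\
    (forall X, trajectory w theta b beta x X ->
       exists S : {set 'I_n},
         c1 * n%:R <= (#|S|)%:R /\
         forall i, i \in S ->
           exists t : nat, c2 * n%:R <= t%:R /\ moves_at X i t).
Proof.
exists (1/2), (1/2); split; first lra; split; first lra.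
exists 0%N => n _.
exists 1%N, (@ww R n), (@Z R n 0), (@th R), 0, 1.
split; first by move=> i j; rewrite /ww; do 2 case: ifP => _ //.
split; first lra.
split; first by exists (@Z R n); split => // t i; apply: step_ok.
move=> X [hX0 hX].
have hXZ : forall t, X t = @Z R n t.
  elim=> [//|t IH]; apply: functional_extensionality => i.
  apply: step_det; rewrite -IH; exact: hX.
pose f := fun k : 'I_(n - n./2) => Ordinal (@half_ord n k).
have finj : injective f by move=> a b [] /eqP; rewrite eqn_add2l => /eqP h; exact: val_inj.
exists (f @: setT); split.
  rewrite card_imset // cardsT card_ord.
  have : (n <= 2 * (n - n./2))%N by lia.
  rewrite -(ler_nat R) natrM => h; lra.
move=> i /imsetP [k _ ->]; exists (n./2 + k).+1; split.
  have : (n <= 2 * (n./2 + k).+1)%N by lia.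
  rewrite -(ler_nat R) natrM => h; lra.
split => //=.
rewrite !hXZ /Z /fv /= ltnSn ltnn => /rowP /(_ ord0); rewrite !mxE; lra.
Qed.
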